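(* Let $p_1\neq p_2$ be points of $\beta\mathbb{N}\setminus\mathbb{N}$. Then the closed subspace $X=\{g\in C(\beta\mathbb{N}): g(p_1)=g(p_2)\}$ of $C(\beta\mathbb{N})$ fails the ball fixed point property.
   Context: $\beta\mathbb{N}$ is the Čech–Stone compactification of $\mathbb{N}$. $C(K)$ is the real Banach space of continuous functions on a compact space $K$ with the sup norm. A real Banach space $X$ has the ball fixed point property (BFPP) if every nonexpansive map $T\colon B_X\to B_X$ (i.e. $\|Tx-Ty\|\le\|x-y\|$) has a fixed point, where $B_X$ is the closed unit ball. *)

(* Defs.v *)
From HB Require Import structures.
From mathcomp Require Import all_boot all_order all_algebra.
From mathcomp Require Import all_classical all_reals.
From mathcomp Require Import topology normedtype.
Set Implicit Arguments. Unset Strict Implicit. Unset Printing Implicit Defensive.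
Import Order.TTheory GRing.Theory Num.Theory numFieldNormedType.Exports.
Local Open Scope classical_set_scope.
Local Open Scope ring_scope.

(* The Cech-Stone compactification of N, realized as the space of
   ultrafilters on nat with the Stone topology. *)
Record ultrafilter_nat := UltrafilterNat {
  uf : set (set nat);
  uf_setT : uf setT;
  uf_not0 : ~ uf set0;
  uf_up : forall A B : set nat, A `<=` B -> uf A -> uf B;
  uf_inter : forall A B : set nat, uf A -> uf B -> uf (A `&` B);
  uf_ultra : forall A : set nat, uf A \/ uf (~` A)
}.

Notation betaN := ultrafilter_nat.

Definition betaN_open (O : set betaN) : Prop :=
  forall p, O p -> exists A : set nat, uf p A /\ forall q, uf q A -> O q.

(* n \in N embedded in betaN as the principal ultrafilter at n;
   p lies in betaN \ N iff p is not principal. *)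
Definition in_N (p : betaN) : Prop :=
  exists n : nat, forall A : set nat, uf p A <-> A n.

Definition betaN_continuous (R : realType) (f : betaN -> R) : Prop :=
  forall V : set R, open V -> betaN_open (f @^-1` V).

Definition supnorm (R : realType) (f : betaN -> R) : R :=
  sup (range (fun p => `|f p|)).

Definition in_ball (R : realType) (S : set (betaN -> R)) (f : betaN -> R) :=
  S f /\ supnorm f <= 1.

Definition ball_fpp (R : realType) (S : set (betaN -> R)) : Prop :=
  forall T : (betaN -> R) -> (betaN -> R),
    (forall f, in_ball S f -> in_ball S (T f)) ->
    (forall f g, in_ball S f -> in_ball S g ->
       supnorm (T f - T g) <= supnorm (f - g)) ->
    exists f, in_ball S f /\ T f = f.

Definition X_sub (R : realType) (p1 p2 : betaN) : set (betaN -> R) :=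
  fun g => betaN_continuous g /\ g p1 = g p2.
Arguments X_sub R p1 p2 : clear implicits.

(* Main.v *)
Require Import Defs.
From HB Require Import structures.
From mathcomp Require Import all_boot all_order all_algebra.
From mathcomp Require Import all_classical all_reals.
From mathcomp Require Import topology normedtype.
Set Implicit Arguments. Unset Strict Implicit. Unset Printing Implicit Defensive.
Import Order.TTheory GRing.Theory Num.Theory numFieldNormedType.Exports.
Local Open Scope classical_set_scope.
Local Open Scope ring_scope.
From mathcomp Require Import ring lra.

Definition loc_cont (R : realType) (f : betaN -> R) :=
  forall p (e : R), 0 < e -> exists A, uf p A /\ forall q, uf q A -> `|f q - f p| < e.

Lemma contE (R : realType) (f : betaN -> R) : betaN_continuous f <-> loc_cont f.
Proof.
split.
- move=> hf p e e0.
  have := hf (ball (f p) e) (ball_open _ _) p (ballxx _ e0).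
  move=> [A [pA HA]]; exists A; split => // q qA.
  have := HA q qA; rewrite /ball /= => h.
  by rewrite distrC.
- move=> hf V oV p /= Vp.
  have := oV _ Vp; rewrite /= => /nbhs_ballP [e /= e0 eV].
  have [A [pA HA]] := hf p e e0.
  exists A; split => // q qA; apply: eV.
  by rewrite /ball /= distrC; apply: HA.
Qed.

Lemma exists_nat_gt (R : realType) (x : R) : exists K : nat, x < K%:R.
Proof.
exists (Num.bound `|x|); apply: le_lt_trans (real_ler_norm _) (archi_boundP _) => //.
exact: num_real.
Qed.

Definition delta (n : nat) : betaN.
refine (@UltrafilterNat (fun A => A n) _ _ _ _ _).
- done.
- done.
- by move=> A B AB; apply: AB.
- by move=> A B.
- by move=> A; case: (pselect (A n)) => h; [left|right].
Defined.

Lemma uf_ne (q : betaN) A : uf q A -> exists n, A n.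
Proof.
move=> qA; apply: contrapT => H; apply: (@uf_not0 q).
suff <- : A = set0 by [].
apply/seteqP; split => x //= Ax; apply: H; by exists x.
Qed.

Lemma principal_of (q : betaN) n : uf q [set n] -> forall A, uf q A <-> A n.
Proof.
move=> qn A; split.
- move=> qA; have [x [Ax xn]] := uf_ne (uf_inter qA qn).
  by rewrite -xn.
- move=> An; apply: uf_up qn => x /= ->; exact: An.
Qed.

Lemma free_compl (q : betaN) n : ~ in_N q -> uf q (~` [set n]).
Proof.
move=> fq; case: (@uf_ultra q [set n]) => // qn.
by exfalso; apply: fq; exists n; apply: principal_of.
Qed.

Lemma free_gt (q : betaN) K : ~ in_N q -> uf q [set k | (K < k)%N].
Proof.
move=> fq; elim: K => [|K IH].
- apply: uf_up (free_compl 0 fq) => x /=.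
  by case: x.
- apply: uf_up (uf_inter IH (free_compl K.+1 fq)) => x /= [h1 h2].
  rewrite ltn_neqAle h1 andbT eq_sym; apply/eqP => h; apply: h2; exact: h.
Qed.

Definition push (p : betaN) (phi : nat -> nat) : betaN.
refine (@UltrafilterNat (fun B => uf p (phi @^-1` B)) _ _ _ _ _).
- exact: (@uf_setT p).
- exact: (@uf_not0 p).
- move=> A B AB; apply: uf_up => x; exact: AB.
- move=> A B; exact: (@uf_inter p).
- move=> A; exact: (@uf_ultra p).
Defined.

Lemma bounded_cont (R : realType) (p : betaN) (h : betaN -> R) :
  ~ in_N p -> loc_cont h -> exists M, forall q, `|h q| <= M.
Proof.
move=> fp hc; apply: contrapT => nb.
have H1 : forall k : nat, exists n, k%:R < `|h (delta n)| + 1.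
  move=> k.
  have [q qk] : exists q, k%:R < `|h q|.
    apply: contrapT => H; apply: nb; exists k%:R => q.
    by rewrite leNgt; apply/negP => hq; apply: H; exists q.
  have [C [qC HC]] := hc q 1 ltr01.
  have [n Cn] := uf_ne qC.
  exists n; have := HC (delta n) Cn.
  have := ler_normD (h q - h (delta n)) (h (delta n)); rewrite subrK.
  rewrite distrC => t1 t2; lra.
pose phi k := projT1 (cid (H1 k)).
have Hphi k : k%:R < `|h (delta (phi k))| + 1 := projT2 (cid (H1 k)).
pose r := push p phi.
have [C [rC HC]] := hc r 1 ltr01.
have [K HK] := exists_nat_gt (`|h r| + 2).
have [k [Ck Kk]] := uf_ne (uf_inter (rC : uf p (phi @^-1` C)) (free_gt K fp)).
have t1 := HC (delta (phi k)) Ck.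
have t2 := Hphi k.
have t3 : K%:R < k%:R :> R by rewrite ltr_nat.
have t4 := ler_normD (h (delta (phi k)) - h r) (h r); rewrite subrK in t4.
lra.
Qed.

Section Clamp.
Variable R : realType.
Definition clamp (x : R) : R := if x < -1 then -1 else if 1 < x then 1 else x.

Lemma clamp_bound (x : R) : `|clamp x| <= 1.
Proof.
rewrite /clamp ler_norml; case: ifP => h1; [|case: ifP => h2]; apply/andP; split; lra.
Qed.

Lemma clamp_lip (x y : R) : `|clamp x - clamp y| <= `|x - y|.
Proof.
rewrite /clamp.
have hxy := ler_norm (x - y). have hyx := ler_norm (y - x). rewrite distrC in hyx.
case: ifP => h1; case: ifP => h2; try case: ifP => h3; try case: ifP => h4;
  rewrite ler_norml; apply/andP; split; lra.
Qed.

Lemma clamp_fix (x d : R) : 0 < d -> x = clamp (x + d) -> x = 1.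
Proof.
move=> d0; rewrite /clamp; case: ifP => h1; [|case: ifP => h2]; lra.
Qed.

Lemma clamp_fixN (x d : R) : 0 < d -> x = clamp (x - d) -> x = -1.
Proof.
move=> d0; rewrite /clamp; case: ifP => h1; [|case: ifP => h2]; lra.
Qed.
End Clamp.

Definition nidx (q : betaN) : nat :=
  match pselect (in_N q) with
  | left H => projT1 (cid H)
  | right _ => 0%N
  end.

Lemma nidxE (q : betaN) n : (forall A, uf q A <-> A n) -> nidx q = n.
Proof.
move=> hq; rewrite /nidx; case: pselect => [H|H]; last first.
  by exfalso; apply: H; exists n.
case: (cid H) => m /= hm.
have : uf q [set n] by apply/hq.
by move/hm.
Qed.

Section W.
Variable R : realType.
Variable A : set nat.

Definition u (q : betaN) : R :=
  if pselect (in_N q) then ((nidx q)%:R + 1)^-1 else 0.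

Definition w (q : betaN) : R :=
  if pselect (uf q A) then u q else - u q.

Lemma w_principal (q : betaN) n : (forall B, uf q B <-> B n) ->
  w q = if pselect (A n) then (n%:R + 1)^-1 else - (n%:R + 1)^-1.
Proof.
move=> hq; rewrite /w /u (nidxE hq).
have iq : in_N q by exists n.
case: pselect => [qA|qA]; case: pselect => [iq'|iq'] //; case: pselect => [An|An] //.
- by exfalso; apply: An; apply/hq.
- by exfalso; apply: qA; apply/hq.
Qed.

Lemma w_free (q : betaN) : ~ in_N q -> w q = 0.
Proof.
move=> fq; have uq : u q = 0.
  rewrite /u; case: (pselect (in_N q)) => [h|h] //.
by rewrite /w uq; case: (pselect (uf q A)) => [h|h]; rewrite ?oppr0.
Qed.

Lemma w_delta n : A n -> w (delta n) = (n%:R + 1)^-1.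
Proof.
move=> An; rewrite (@w_principal _ n) //.
by case: pselect.
Qed.

Lemma w_deltaN n : ~ A n -> w (delta n) = - (n%:R + 1)^-1.
Proof.
move=> An; rewrite (@w_principal _ n) //.
by case: pselect.
Qed.

Lemma normw_le (q : betaN) n : (forall B, uf q B <-> B n) -> `|w q| = (n%:R + 1)^-1.
Proof.
move=> hq; rewrite (w_principal hq); case: pselect => [h|h]; rewrite ?normrN ger0_norm //;
  by rewrite invr_ge0; apply: addr_ge0.
Qed.

Lemma w_cont : loc_cont w.
Proof.
move=> p e e0.
case: (pselect (in_N p)) => [[n hp]|fp].
- exists [set n]; split; first by apply/hp.
  move=> q qn; have hq := principal_of qn.
  by rewrite (w_principal hq) (w_principal hp) subrr normr0.
- have [K HK] := exists_nat_gt (e^-1).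
  exists [set k | (K < k)%N]; split; first exact: free_gt.
  move=> q qK; rewrite (w_free fp) subr0.
  case: (pselect (in_N q)) => [[m hq]|fq]; last by rewrite (w_free fq) normr0.
  rewrite (normw_le hq).
  have Km : (K < m)%N by apply/(hq [set k | (K < k)%N]).
  have Km' : K%:R + 1 <= m%:R + 1 :> R by rewrite lerD2r ler_nat ltnW.
  have h1 : 0 < K%:R + 1 :> R by apply: ltr_pwDr => //; exact: ler0n.
  rewrite -(invrK e) ltf_pV2 ?posrE ?invr_gt0 //; last by apply: ltr_pwDr => //; exact: ler0n.
  apply: lt_le_trans Km'.
  apply: lt_trans HK _; lra.
Qed.
End W.

Definition Tm (R : realType) (A : set nat) (g : betaN -> R) : betaN -> R :=
  fun q => clamp (g q + (w R A) q).

Lemma Tm_cont (R : realType) A (g : betaN -> R) : loc_cont g -> loc_cont (Tm A g).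
Proof.
move=> gc p e e0.
have e2 : 0 < e / 2 by apply: divr_gt0.
have [C1 [pC1 H1]] := gc p _ e2.
have [C2 [pC2 H2]] := @w_cont R A p _ e2.
exists (C1 `&` C2); split; first exact: uf_inter.
move=> q qC.
have qC1 : uf q C1 by apply: uf_up qC => x [].
have qC2 : uf q C2 by apply: uf_up qC => x [].
apply: le_lt_trans (clamp_lip _ _) _.
have -> : g q + (w R A) q - (g p + (w R A) p) = (g q - g p) + ((w R A) q - (w R A) p) by ring.
apply: le_lt_trans (ler_normD _ _) _.
have := H1 q qC1; have := H2 q qC2; lra.
Qed.

Lemma sub_cont (R : realType) (f g : betaN -> R) : loc_cont f -> loc_cont g -> loc_cont (f - g).
Proof.
move=> fc gc p e e0.
have e2 : 0 < e / 2 by apply: divr_gt0.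
have [C1 [pC1 H1]] := fc p _ e2.
have [C2 [pC2 H2]] := gc p _ e2.
exists (C1 `&` C2); split; first exact: uf_inter.
move=> q qC.
have qC1 : uf q C1 by apply: uf_up qC => x [].
have qC2 : uf q C2 by apply: uf_up qC => x [].
rewrite /=.
have -> : f q - g q - (f p - g p) = (f q - f p) - (g q - g p) by ring.
apply: le_lt_trans (ler_normB _ _) _.
have := H1 q qC1; have := H2 q qC2; lra.
Qed.

Lemma diff_uf (p1 p2 : betaN) : p1 <> p2 -> exists A, uf p1 A /\ ~ uf p2 A.
Proof.
move=> hne; apply: contrapT => H; apply: hne.
have E : forall A, uf p1 A -> uf p2 A.
  move=> A h1; apply: contrapT => h2; apply: H; by exists A.
have E2 : forall A, uf p2 A -> uf p1 A.
  move=> A h2; case: (@uf_ultra p1 A) => // h1.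
  have := E _ h1 => h3.
  exfalso; apply: (@uf_not0 p2).
  suff <- : A `&` ~` A = set0 by apply: uf_inter.
  by apply/seteqP; split => x // [].
clear H; case: p1 p2 E E2 => [u1 a1 b1 c1 d1 e1] [u2 a2 b2 c2 d2 e2] /= E E2.
have eu : u1 = u2.
  by apply/funext => A; apply/propext; split; [apply: E|apply: E2].
subst u2; congr UltrafilterNat; apply: Prop_irrelevance.
Qed.

Theorem mainTheorem5 (R : realType) (p1 p2 : betaN) :
  p1 <> p2 -> ~ in_N p1 -> ~ in_N p2 ->
  ~ ball_fpp (X_sub R p1 p2).
Proof.
move=> hne f1 f2 bf.
have [A [p1A p2A]] := diff_uf hne.
have p2nA : uf p2 (~` A) by case: (@uf_ultra p2 A).
have [f [[[fc fe] fb] Tfix]] : exists f, in_ball (X_sub R p1 p2) f /\ Tm A f = f.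
  apply: bf.
  - move=> f [[fc fe] fb]; split; first split.
    + by apply/contE; apply: Tm_cont; apply/contE.
    + by rewrite /Tm !w_free // fe.
    + apply: ge_sup; first by exists `|Tm A f p1|; exists p1.
      move=> y [q _ <-]; exact: clamp_bound.
  - move=> f g [[fc fe] fb] [[gc ge] gb].
    have dc : loc_cont (f - g) by apply: sub_cont; apply/contE.
    have [M HM] := bounded_cont f1 dc.
    apply: ge_sup; first by exists `|(Tm A f - Tm A g) p1|; exists p1.
    move=> y [q _ <-] /=.
    apply: le_trans (clamp_lip _ _) _.
    have -> : f q + (w R A) q - (g q + (w R A) q) = (f - g) q by transitivity (f q - g q); [ring|by []].
    apply: ub_le_sup; last by exists q.
    exists M; move=> z [q' _ <-]; exact: HM.
have fcl := (proj1 (contE f) fc).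
have ptA n : A n -> f (delta n) = 1.
  move=> An; apply: (@clamp_fix _ _ ((n%:R + 1)^-1)).
    by rewrite invr_gt0; apply: ltr_pwDr => //; exact: ler0n.
  by rewrite -{1}Tfix /Tm w_delta.
have ptB n : ~ A n -> f (delta n) = -1.
  move=> An; apply: (@clamp_fixN _ _ ((n%:R + 1)^-1)).
    by rewrite invr_gt0; apply: ltr_pwDr => //; exact: ler0n.
  by rewrite -{1}Tfix /Tm w_deltaN.
have v1 : f p1 = 1.
  apply: contrapT => h.
  have e0 : 0 < `|f p1 - 1| by rewrite normr_gt0 subr_eq0; apply/eqP.
  have [C [pC HC]] := fcl p1 _ e0.
  have [n [Cn An]] := uf_ne (uf_inter pC p1A).
  have := HC (delta n) Cn; rewrite ptA // distrC; lra.
have v2 : f p2 = -1.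
  apply: contrapT => h.
  have e0 : 0 < `|f p2 + 1| by rewrite normr_gt0 -[1]opprK subr_eq0; apply/eqP.
  have [C [pC HC]] := fcl p2 _ e0.
  have [n [Cn An]] := uf_ne (uf_inter pC p2nA).
  have := HC (delta n) Cn; rewrite ptB // distrC opprK; lra.
move: fe; rewrite v1 v2; lra.
Qed.
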